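(* Let ${\cal B}$ be a bialgebra over a field ${\bf k}$, let $({\cal E},\rho)$ be a right ${\cal B}$-comodule algebra, and let $T\subset{\cal E}$ be a left Ore set with localization map $i_T:{\cal E}\to T^{-1}{\cal E}$. Then $T$ is $\rho$-compatible if and only if for every $t\in T$ the element $((i_T\otimes{\rm id})\circ\rho)(t)$ is invertible in the algebra $T^{-1}{\cal E}\otimes{\cal B}$.
   Context: A right ${\cal B}$-comodule algebra is an associative unital ${\bf k}$-algebra ${\cal E}$ with a right ${\cal B}$-coaction $\rho:{\cal E}\to{\cal E}\otimes{\cal B}$ which is a homomorphism of unital algebras. A left Ore set in a ring $R$ is a multiplicative subset $S\subset R\setminus\{0\}$ (containing $1$, closed under products) such that for all $s\in S,r\in R$ there exist $s'\in S,r'\in R$ with $r's=s'r$, and such that $ns=0$ with $n\in R,s\in S$ implies $s'n=0$ for some $s'\in S$; $S^{-1}R$ denotes the ring of left fractions $s^{-1}r$ and $i_S:R\to S^{-1}R$, $r\mapsto 1^{-1}r$, the localization map. A left Ore set $T$ in ${\cal E}$ is called $\rho$-compatible if there exists a unique map $\rho_T:T^{-1}{\cal E}\to T^{-1}{\cal E}\otimes{\cal B}$ making $(T^{-1}{\cal E},\rho_T)$ a right ${\cal B}$-comodule algebra and satisfying $\rho_T\circ i_T=(i_T\otimes{\rm id})\circ\rho$. *)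

(* Defs.v *)
(* Tensor products are given by their universal property;
   auxiliary induced maps are obtained with Hilbert's epsilon. *)
From HB Require Import structures.
From mathcomp Require Import all_boot all_order all_algebra.
From Stdlib Require Import ClassicalEpsilon.
Set Implicit Arguments. Unset Strict Implicit. Unset Printing Implicit Defensive.
Import GRing.Theory.
Local Open Scope ring_scope.

Definition klinear {k : fieldType} {U W : lmodType k} (f : U -> W) : Prop :=
  forall (a : k) (u v : U), f (a *: u + v) = a *: f u + f v.

Definition kbilinear {k : fieldType} {U V W : lmodType k} (f : U -> V -> W) : Prop :=
  (forall v, klinear (fun u => f u v)) /\ (forall u, klinear (f u)).

Definition ktrilinear {k : fieldType} {U V X W : lmodType k}
  (f : U -> V -> X -> W) : Prop :=
  (forall v x, klinear (fun u => f u v x)) /\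
  (forall u x, klinear (fun v => f u v x)) /\
  (forall u v, klinear (f u v)).

Definition is_tensor {k : fieldType} {U V W : lmodType k} (t : U -> V -> W) : Prop :=
  kbilinear t /\
  forall (Z : lmodType k) (f : U -> V -> Z), kbilinear f ->
    exists! g : W -> Z, klinear g /\ forall u v, g (t u v) = f u v.

Definition is_tensor3 {k : fieldType} {U V X W : lmodType k}
  (t : U -> V -> X -> W) : Prop :=
  ktrilinear t /\
  forall (Z : lmodType k) (f : U -> V -> X -> Z), ktrilinear f ->
    exists! g : W -> Z, klinear g /\ forall u v x, g (t u v x) = f u v x.

Definition is_algtensor {k : fieldType} {A C W : algType k} (t : A -> C -> W) : Prop :=
  is_tensor t /\
  (forall a c a' c', t a c * t a' c' = t (a * a') (c * c')) /\
  t 1 1 = 1.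

(** the linear map W -> Z induced by a bilinear f : U -> V -> Z,
    i.e. the unique linear g with g (t u v) = f u v (when it exists) *)
Definition tlin {k : fieldType} {U V W Z : lmodType k}
  (t : U -> V -> W) (f : U -> V -> Z) : W -> Z :=
  epsilon (inhabits (fun _ : W => (0 : Z)))
    (fun g => klinear g /\ forall u v, g (t u v) = f u v).

Definition kalg_morph {k : fieldType} {A C : algType k} (f : A -> C) : Prop :=
  klinear f /\ (forall x y, f (x * y) = f x * f y) /\ f 1 = 1.

Definition invertible {k : fieldType} {A : algType k} (x : A) : Prop :=
  exists y, x * y = 1 /\ y * x = 1.

(** coassociativity (d (x) id) o d = (id (x) Delta) o d for d : U -> U (x) V,
    Delta : V -> V (x) V, computed in U (x) V (x) V *)
Definition coassoc {k : fieldType} {U V W VV W3 : lmodType k}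
  (t : U -> V -> W) (tV : V -> V -> VV) (t3 : U -> V -> V -> W3)
  (d : U -> W) (Delta : V -> VV) : Prop :=
  forall u,
    tlin t (fun u0 v => tlin t (fun u' v' => t3 u' v' v) (d u0)) (d u) =
    tlin t (fun u0 v => tlin tV (fun v1 v2 => t3 u0 v1 v2) (Delta v)) (d u).

Definition rcounital {k : fieldType} {U V W : lmodType k}
  (t : U -> V -> W) (d : U -> W) (eps : V -> k) : Prop :=
  forall u, tlin t (fun u0 v => eps v *: u0) (d u) = u.

Definition is_bialgebra {k : fieldType} {B BB : algType k} {BBB : lmodType k}
  (tBB : B -> B -> BB) (tBBB : B -> B -> B -> BBB)
  (Delta : B -> BB) (eps : B -> k) : Prop :=
  kalg_morph Delta /\
  (forall (a : k) x y, eps (a *: x + y) = a * eps x + eps y) /\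
  (forall x y, eps (x * y) = eps x * eps y) /\ eps 1 = 1 /\
  coassoc tBB tBB tBBB Delta Delta /\
  rcounital tBB Delta eps /\
  (forall x, tlin tBB (fun b c => eps b *: c) (Delta x) = x).

Definition is_comodule_algebra {k : fieldType} {E B EB BB : algType k}
  {EBB : lmodType k}
  (tE : E -> B -> EB) (tE3 : E -> B -> B -> EBB) (tBB : B -> B -> BB)
  (Delta : B -> BB) (eps : B -> k) (rho : E -> EB) : Prop :=
  kalg_morph rho /\ coassoc tE tBB tE3 rho Delta /\ rcounital tE rho eps.

Definition left_ore_set {k : fieldType} {E : algType k} (T : pred E) : Prop :=
  T 1 /\ (forall s s', T s -> T s' -> T (s * s')) /\
  (forall s, T s -> s != 0) /\
  (forall s r, T s -> exists s' r', T s' /\ r' * s = s' * r) /\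
  (forall n s, T s -> n * s = 0 -> exists s', T s' /\ s' * n = 0).

Definition is_left_fractions {k : fieldType} {E L : algType k}
  (T : pred E) (i : E -> L) : Prop :=
  kalg_morph i /\
  (forall s, T s -> invertible (i s)) /\
  (forall x, exists s r y, T s /\ y * i s = 1 /\ i s * y = 1 /\ x = y * i r) /\
  (forall r, i r = 0 <-> exists s, T s /\ s * r = 0).

Definition rho_compatible {k : fieldType} {E B EB BB L LB : algType k}
  {LBB : lmodType k}
  (i : E -> L) (tE : E -> B -> EB) (tL : L -> B -> LB)
  (tL3 : L -> B -> B -> LBB) (tBB : B -> B -> BB)
  (Delta : B -> BB) (eps : B -> k) (rho : E -> EB) : Prop :=
  exists! rhoT : L -> LB,
    is_comodule_algebra tL tL3 tBB Delta eps rhoT /\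
    forall e, rhoT (i e) = tlin tE (fun e0 b => tL (i e0) b) (rho e).

(* Main.v *)
Require Import Defs.
From HB Require Import structures.
From mathcomp Require Import all_boot all_order all_algebra.
From Stdlib Require Import ClassicalEpsilon FunctionalExtensionality.
Set Implicit Arguments. Unset Strict Implicit. Unset Printing Implicit Defensive.
Import GRing.Theory.
Local Open Scope ring_scope.


Section Lin.
Variable k : fieldType.

Lemma klinearP (U W : lmodType k) (f : U -> W) :
  (forall u v, f (u + v) = f u + f v) -> (forall a u, f (a *: u) = a *: f u) ->
  klinear f.
Proof. by move=> hD hZ a u v; rewrite hD hZ. Qed.

Lemma klin0 (U W : lmodType k) (f : U -> W) : klinear f -> f 0 = 0.
Proof.
move=> hf; have := hf 1 0 0; rewrite !scale1r addr0 => h.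
by apply: (addrI (f 0)); rewrite addr0 -h.
Qed.

Lemma klinD (U W : lmodType k) (f : U -> W) : klinear f -> forall u v, f (u + v) = f u + f v.
Proof. by move=> hf u v; have := hf 1 u v; rewrite !scale1r. Qed.

Lemma klinZ (U W : lmodType k) (f : U -> W) : klinear f -> forall a u, f (a *: u) = a *: f u.
Proof. by move=> hf a u; rewrite -[a *: u]addr0 hf klin0 // addr0. Qed.

Lemma klin_comp (U V W : lmodType k) (f : V -> W) (g : U -> V) :
  klinear f -> klinear g -> klinear (fun x => f (g x)).
Proof. by move=> hf hg a u v; rewrite hg hf. Qed.

Lemma klin_id (U : lmodType k) : klinear (fun x : U => x).
Proof. by []. Qed.

Lemma klinB (U W : lmodType k) (f : U -> W) : klinear f -> forall u v, f (u - v) = f u - f v.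
Proof.
move=> hf u v; by rewrite klinD // -scaleN1r klinZ // scaleN1r.
Qed.

End Lin.

Section Tens.
Variables (k : fieldType) (U V W : lmodType k) (t : U -> V -> W).
Hypothesis ht : is_tensor t.

Lemma tlin_spec (Z : lmodType k) (f : U -> V -> Z) : kbilinear f ->
  klinear (tlin t f) /\ forall u v, tlin t f (t u v) = f u v.
Proof.
move=> hf; have [g [hg _]] := ht.2 Z f hf.
unfold tlin; apply epsilon_spec; exists g; exact hg.
Qed.

Lemma tlinE (Z : lmodType k) (f : U -> V -> Z) : kbilinear f ->
  forall u v, tlin t f (t u v) = f u v.
Proof. by move=> hf; case: (tlin_spec hf). Qed.

Lemma tlin_lin (Z : lmodType k) (f : U -> V -> Z) : kbilinear f -> klinear (tlin t f).
Proof. by move=> hf; case: (tlin_spec hf). Qed.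

Lemma text (Z : lmodType k) (g h : W -> Z) : klinear g -> klinear h ->
  (forall u v, g (t u v) = h (t u v)) -> forall w, g w = h w.
Proof.
move=> hg hh e w.
have hb : kbilinear (fun u v => g (t u v)).
  split=> [v|u] a x y.
  - by rewrite (ht.1.1 v) hg.
  - by rewrite (ht.1.2 u) hg.
have [g0 [_ hu]] := ht.2 Z _ hb.
have e1 := hu g (conj hg (fun u v => erefl)).
have e2 := hu h (conj hh (fun u v => esym (e u v))).
by rewrite -e1 -e2.
Qed.

End Tens.

Section Tens3.
Variables (k : fieldType) (U V X W : lmodType k) (t : U -> V -> X -> W).
Hypothesis ht : is_tensor3 t.

Definition tlin3 (Z : lmodType k) (f : U -> V -> X -> Z) : W -> Z :=
  epsilon (inhabits (fun _ : W => (0 : Z)))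
    (fun g => klinear g /\ forall u v x, g (t u v x) = f u v x).

Lemma tlin3_spec (Z : lmodType k) (f : U -> V -> X -> Z) : ktrilinear f ->
  klinear (tlin3 f) /\ forall u v x, tlin3 f (t u v x) = f u v x.
Proof.
move=> hf; have [g [hg _]] := ht.2 Z f hf.
unfold tlin3; apply epsilon_spec; exists g; exact hg.
Qed.

Lemma tlin3E (Z : lmodType k) (f : U -> V -> X -> Z) : ktrilinear f ->
  forall u v x, tlin3 f (t u v x) = f u v x.
Proof. by move=> hf; case: (tlin3_spec hf). Qed.

Lemma tlin3_lin (Z : lmodType k) (f : U -> V -> X -> Z) : ktrilinear f -> klinear (tlin3 f).
Proof. by move=> hf; case: (tlin3_spec hf). Qed.

Lemma text3 (Z : lmodType k) (g h : W -> Z) : klinear g -> klinear h ->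
  (forall u v x, g (t u v x) = h (t u v x)) -> forall w, g w = h w.
Proof.
move=> hg hh e w.
have hb : ktrilinear (fun u v x => g (t u v x)).
  split; [|split] => [v x'|u x'|u v] a x1 y.
  - by rewrite (ht.1.1 v x') hg.
  - by rewrite (ht.1.2.1 u x') hg.
  - by rewrite (ht.1.2.2 u v) hg.
have [g0 [_ hu]] := ht.2 Z _ hb.
have e1 := hu g (conj hg (fun u v x => erefl)).
have e2 := hu h (conj hh (fun u v x => esym (e u v x))).
by rewrite -e1 -e2.
Qed.

End Tens3.


Section Unique.
Variables (k : fieldType) (E L : algType k) (T : pred E) (iT : E -> L).
Hypothesis Hi : is_left_fractions T iT.

Lemma ext_unique (X : Type) (m : X -> X -> X) (e : X) :
  associative m -> left_id e m -> right_id e m ->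
  forall g h : L -> X,
  (forall a b, g (a * b) = m (g a) (g b)) ->
  (forall a b, h (a * b) = m (h a) (h b)) ->
  g 1 = e -> h 1 = e -> (forall r, g (iT r) = h (iT r)) -> forall x, g x = h x.
Proof.
move=> mA m1x mx1 g h gM hM g1 h1 gi x.
have [s [r [y [Ts [ys [sy ->]]]]]] := Hi.2.2.1 x.
rewrite gM hM gi; congr m.
have e1 : h (iT s * y) = e by rewrite sy h1.
by rewrite -[g y]mx1 -e1 hM -gi mA -gM ys g1 m1x.
Qed.

End Unique.

Section Ore.
Variables (k : fieldType) (E R L : algType k) (T : pred E) (iT : E -> L) (phi : E -> R).
Hypothesis HT : left_ore_set T.
Hypothesis Hi : is_left_fractions T iT.
Hypothesis Hphi : kalg_morph phi.
Hypothesis Hinv : forall s, T s -> invertible (phi s).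

Let iM a b : iT (a * b) = iT a * iT b := Hi.1.2.1 a b.
Let pM a b : phi (a * b) = phi a * phi b := Hphi.2.1 a b.

Lemma pcancel s z z' : T s -> phi s * z = phi s * z' -> z = z'.
Proof.
move=> Ts e; have [y [_ ys]] := Hinv Ts.
by rewrite -[z]mul1r -[z']mul1r -ys -!mulrA e.
Qed.

Lemma iT_phi a b : iT a = iT b -> phi a = phi b.
Proof.
move=> e; have : iT (a - b) = 0 by rewrite (klinB Hi.1.1) e subrr.
move/(Hi.2.2.2 (a - b)) => [t [Tt tab]].
have : phi t * phi (a - b) = phi t * 0 by rewrite -pM tab (klin0 Hphi.1) mulr0.
move/(pcancel Tt); rewrite (klinB Hphi.1) => /eqP; rewrite subr_eq0 => /eqP //.
Qed.

Lemma rep_ex x : exists s r, T s /\ iT s * x = iT r.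
Proof.
have [s [r [y [Ts [ys [sy ->]]]]]] := Hi.2.2.1 x.
by exists s, r; split => //; rewrite mulrA sy mul1r.
Qed.

Lemma rep_indep x s r s' r' z : T s -> iT s * x = iT r -> T s' -> iT s' * x = iT r' ->
  phi s * z = phi r -> phi s' * z = phi r'.
Proof.
move=> Ts sx Ts' sx' sz.
have [s1 [r1 [Ts1 e1]]] := HT.2.2.2.1 s s' Ts.
have ei : iT (s1 * r') = iT (r1 * r).
  by rewrite !iM -sx -sx' !mulrA -!iM e1.
have ep := iT_phi ei.
apply: (pcancel Ts1); rewrite mulrA -pM -e1 pM -mulrA sz -!pM ep //.
Qed.

Definition oext (x : L) : R :=
  epsilon (inhabits 0) (fun z => forall s r, T s -> iT s * x = iT r -> phi s * z = phi r).

Lemma oext_spec x s r : T s -> iT s * x = iT r -> phi s * oext x = phi r.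
Proof.
have [s0 [r0 [Ts0 e0]]] := rep_ex x.
have [y0 [py _]] := Hinv Ts0.
have ex : exists z, forall s r, T s -> iT s * x = iT r -> phi s * z = phi r.
  exists (y0 * phi r0) => s2 r2 Ts2 e2.
  apply: (rep_indep Ts0 e0 Ts2 e2); by rewrite mulrA py mul1r.
move: s r; unfold oext; apply epsilon_spec; exact ex.
Qed.

Lemma oext_char x s r z : T s -> iT s * x = iT r -> phi s * z = phi r -> oext x = z.
Proof. move=> Ts e ez; apply: (pcancel Ts); by rewrite ez (oext_spec Ts e). Qed.

Lemma oext_iT e : oext (iT e) = phi e.
Proof. by apply: (oext_char (s := 1) (r := e)) => //; rewrite ?Hi.1.2.2 ?Hphi.2.2 ?mul1r // HT.1. Qed.

Lemma oext_M x x' : oext (x * x') = oext x * oext x'.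
Proof.
have [s [r [Ts e]]] := rep_ex x.
have [s' [r' [Ts' e']]] := rep_ex x'.
have [s1 [r1 [Ts1 e1]]] := HT.2.2.2.1 s' r Ts'.
apply: (oext_char (s := s1 * s) (r := r1 * r')).
- exact: HT.2.1.
- by rewrite !iM -!mulrA [iT s * (x * x')]mulrA e mulrA -iM -e1 iM -mulrA e'.
- by rewrite pM -!mulrA [phi s * (_ * _)]mulrA (oext_spec Ts e) mulrA -pM -e1 pM -mulrA (oext_spec Ts' e') pM.
Qed.

Lemma oext_lin : klinear oext.
Proof.
move=> a x x'.
have [s [r [Ts e]]] := rep_ex x.
have [s' [r' [Ts' e']]] := rep_ex x'.
have [s1 [r1 [Ts1 e1]]] := HT.2.2.2.1 s s' Ts.
apply: (oext_char (s := s1 * s') (r := a *: (r1 * r) + s1 * r')).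
- exact: HT.2.1.
- have h1 : iT s1 * iT s' = iT r1 * iT s by rewrite -!iM e1.
  by rewrite (klinD Hi.1.1) (klinZ Hi.1.1) !iM mulrDr {1}h1 -!mulrA -!scalerAr e e'.
- have h1 : phi s1 * phi s' = phi r1 * phi s by rewrite -!pM e1.
  by rewrite (klinD Hphi.1) (klinZ Hphi.1) !pM mulrDr {1}h1 -!mulrA -!scalerAr (oext_spec Ts e) (oext_spec Ts' e').
Qed.

Lemma oext_1 : oext 1 = 1.
Proof. by rewrite -Hi.1.2.2 oext_iT Hphi.2.2. Qed.

Lemma oext_morph : kalg_morph oext.
Proof. split; [exact: oext_lin | split; [exact: oext_M | exact: oext_1]]. Qed.

End Ore.


Section Gen.
Variable k : fieldType.

Lemma klin_comb (U W : lmodType k) (f g : U -> W) (a : k) :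
  klinear f -> klinear g -> klinear (fun x => a *: f x + g x).
Proof.
move=> hf hg b x y; rewrite hf hg !scalerDr !scalerA mulrC.
by rewrite -!addrA; congr (_ + _); rewrite addrCA.
Qed.

Lemma mulr_linl (A : algType k) (y : A) : klinear (fun x => x * y).
Proof. by move=> a u v; rewrite mulrDl scalerAl. Qed.

Lemma mulr_linr (A : algType k) (x : A) : klinear (fun y => x * y).
Proof. by move=> a u v; rewrite mulrDr scalerAr. Qed.

Lemma scale_linr (U : lmodType k) (a : k) : klinear (fun u : U => a *: u).
Proof. by move=> b u v; rewrite scalerDr !scalerA mulrC. Qed.

Lemma tlin_param (U V W Z P : lmodType k) (t : U -> V -> W) (f : P -> U -> V -> Z) :
  is_tensor t -> (forall p, kbilinear (f p)) -> (forall u v, klinear (fun p => f p u v)) ->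
  forall w, klinear (fun p => tlin t (f p) w).
Proof.
move=> ht hb hp w a p q.
apply: (text ht (g := tlin t (f (a *: p + q)))
               (h := fun w => a *: tlin t (f p) w + tlin t (f q) w)).
- exact: tlin_lin.
- by apply: klin_comb; apply: tlin_lin.
- by move=> u v; rewrite !tlinE // hp.
Qed.

Lemma tlin3_param (U V X W Z P : lmodType k) (t : U -> V -> X -> W) (f : P -> U -> V -> X -> Z) :
  is_tensor3 t -> (forall p, ktrilinear (f p)) -> (forall u v x, klinear (fun p => f p u v x)) ->
  forall w, klinear (fun p => tlin3 t (f p) w).
Proof.
move=> ht hb hp w a p q.
apply: (text3 ht (g := tlin3 t (f (a *: p + q)))
               (h := fun w => a *: tlin3 t (f p) w + tlin3 t (f q) w)).
- exact: tlin3_lin.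
- by apply: klin_comb; apply: tlin3_lin.
- by move=> u v x; rewrite !tlin3E // hp.
Qed.

Lemma text2 (U V W U' V' W' Z : lmodType k) (t : U -> V -> W) (t' : U' -> V' -> W')
  (F G : W -> W' -> Z) :
  is_tensor t -> is_tensor t' ->
  (forall w', klinear (fun w => F w w')) -> (forall w, klinear (F w)) ->
  (forall w', klinear (fun w => G w w')) -> (forall w, klinear (G w)) ->
  (forall u v u' v', F (t u v) (t' u' v') = G (t u v) (t' u' v')) ->
  forall w w', F w w' = G w w'.
Proof.
move=> ht ht' F1 F2 G1 G2 e.
have e1 : forall u v w', F (t u v) w' = G (t u v) w'.
  by move=> u v; apply: (text ht') => //; apply: e.
move=> w w'; by apply: (text ht (g := fun w => F w w') (h := fun w => G w w')).
Qed.

End Gen.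


Section Mu.
Variables (k : fieldType) (L B : algType k) (LBB : lmodType k) (tL3 : L -> B -> B -> LBB).
Hypothesis hL3 : is_tensor3 tL3.

Let t3lin1 v x : klinear (fun u => tL3 u v x) := hL3.1.1 v x.
Let t3lin2 u x : klinear (fun v => tL3 u v x) := hL3.1.2.1 u x.
Let t3lin3 u v : klinear (tL3 u v) := hL3.1.2.2 u v.

Definition rm (a : L) (b c : B) : LBB -> LBB :=
  tlin3 tL3 (fun u v w => tL3 (u * a) (v * b) (w * c)).

Lemma rm_tri a b c : ktrilinear (fun u v w => tL3 (u * a) (v * b) (w * c)).
Proof.
split; [|split] => [v w|u w|u v].
- exact: (klin_comp (t3lin1 _ _) (mulr_linl a)).
- exact: (klin_comp (t3lin2 _ _) (mulr_linl b)).
- exact: (klin_comp (t3lin3 _ _) (mulr_linl c)).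
Qed.

Lemma rmE a b c u v w : rm a b c (tL3 u v w) = tL3 (u * a) (v * b) (w * c).
Proof. by rewrite /rm tlin3E //; apply: rm_tri. Qed.

Lemma rm_lin a b c : klinear (rm a b c).
Proof. by apply: tlin3_lin => //; apply: rm_tri. Qed.

Lemma rm_abc X : ktrilinear (fun a b c => rm a b c X).
Proof.
split; [|split] => [b c|a c|a b].
- apply: (tlin3_param (f := fun a u v w => tL3 (u * a) (v * b) (w * c))) => //.
  + by move=> a; apply: rm_tri.
  + by move=> u v w; apply: (klin_comp (t3lin1 _ _) (mulr_linr u)).
- apply: (tlin3_param (f := fun b u v w => tL3 (u * a) (v * b) (w * c))) => //.
  + by move=> b; apply: rm_tri.
  + by move=> u v w; apply: (klin_comp (t3lin2 _ _) (mulr_linr v)).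
- apply: (tlin3_param (f := fun c u v w => tL3 (u * a) (v * b) (w * c))) => //.
  + by move=> c; apply: rm_tri.
  + by move=> u v w; apply: (klin_comp (t3lin3 _ _) (mulr_linr w)).
Qed.

Definition mu (X Y : LBB) : LBB := tlin3 tL3 (fun a b c => rm a b c X) Y.

Lemma muE a b c a' b' c' : mu (tL3 a b c) (tL3 a' b' c') = tL3 (a * a') (b * b') (c * c').
Proof. by rewrite /mu tlin3E ?rmE //; apply: rm_abc. Qed.

Lemma mu_linr X : klinear (mu X).
Proof. by apply: tlin3_lin => //; apply: rm_abc. Qed.

Lemma mu_linl Y : klinear (fun X => mu X Y).
Proof.
apply: (tlin3_param (f := fun X a b c => rm a b c X)) => //.
- by move=> X; apply: rm_abc.
- by move=> a b c; apply: rm_lin.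
Qed.

Lemma mu_simple3 (F G : LBB -> LBB) : klinear F -> klinear G ->
  (forall u v w, F (tL3 u v w) = G (tL3 u v w)) -> forall X, F X = G X.
Proof. by move=> hF hG e; apply: (text3 hL3). Qed.

Lemma mu_assoc : associative mu.
Proof.
have e1 : forall a b c a' b' c' Z, mu (mu (tL3 a b c) (tL3 a' b' c')) Z
    = mu (tL3 a b c) (mu (tL3 a' b' c') Z).
  move=> a b c a' b' c'; apply: mu_simple3.
  - exact: mu_linr.
  - exact: (klin_comp (mu_linr _) (mu_linr _)).
  - by move=> u v w; rewrite !muE !mulrA.
have e2 : forall a b c Y Z, mu (mu (tL3 a b c) Y) Z = mu (tL3 a b c) (mu Y Z).
  move=> a b c Y Z; apply: (mu_simple3 (F := fun Y => mu (mu (tL3 a b c) Y) Z)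
                                        (G := fun Y => mu (tL3 a b c) (mu Y Z))).
  - exact: (klin_comp (mu_linl _) (mu_linr _)).
  - exact: (klin_comp (mu_linr _) (mu_linl _)).
  - by move=> u v w; apply: e1.
move=> X Y Z.
have h1 : klinear (fun X => mu (mu X Y) Z) by exact: (klin_comp (mu_linl _) (mu_linl _)).
have h2 : klinear (fun X => mu X (mu Y Z)) by exact: mu_linl.
exact: (esym (mu_simple3 h1 h2 (fun u v w => e2 u v w Y Z) X)).
Qed.

Lemma mu1x : left_id (tL3 1 1 1) mu.
Proof.
move=> X; apply: (mu_simple3 (F := mu (tL3 1 1 1)) (G := fun X => X)) => //.
- exact: mu_linr.
- by move=> u v w; rewrite muE !mul1r.
Qed.

Lemma mux1 : right_id (tL3 1 1 1) mu.
Proof.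
move=> X; apply: (mu_simple3 (F := fun X => mu X (tL3 1 1 1)) (G := fun X => X)) => //.
- exact: mu_linl.
- by move=> u v w; rewrite muE !mulr1.
Qed.

End Mu.


Section Main.
Variables (k : fieldType) (B BB : algType k)
  (tBB : B -> B -> BB) (Delta : B -> BB) (eps : B -> k)
  (E EB : algType k) (EBB : lmodType k)
  (tE : E -> B -> EB) (tE3 : E -> B -> B -> EBB) (rho : E -> EB)
  (T : pred E)
  (L LB : algType k) (LBB : lmodType k)
  (tL : L -> B -> LB) (tL3 : L -> B -> B -> LBB) (iT : E -> L).
Hypotheses (hBB : is_algtensor tBB) (hD : kalg_morph Delta)
  (heps : forall (a : k) x y, eps (a *: x + y) = a * eps x + eps y)
  (hepsM : forall x y, eps (x * y) = eps x * eps y) (heps1 : eps 1 = 1)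
  (hE : is_algtensor tE) (hE3 : is_tensor3 tE3)
  (hrho : is_comodule_algebra tE tE3 tBB Delta eps rho)
  (HT : left_ore_set T) (Hi : is_left_fractions T iT)
  (hL : is_algtensor tL) (hL3 : is_tensor3 tL3).

Let iTlin : klinear iT := Hi.1.1.

Definition jEL := tlin tE (fun e0 b => tL (iT e0) b).

Lemma jEL_bil : kbilinear (fun e0 b => tL (iT e0) b).
Proof.
split => [b|e0].
- exact: (klin_comp (hL.1.1.1 b) iTlin).
- exact: (hL.1.1.2 (iT e0)).
Qed.

Lemma jELE e b : jEL (tE e b) = tL (iT e) b.
Proof. by rewrite /jEL (tlinE hE.1) //; apply: jEL_bil. Qed.

Lemma jEL_lin : klinear jEL.
Proof. by apply: (tlin_lin hE.1); apply: jEL_bil. Qed.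

Lemma jEL_M X Y : jEL (X * Y) = jEL X * jEL Y.
Proof.
apply: (text2 (F := fun X Y => jEL (X * Y)) (G := fun X Y => jEL X * jEL Y) hE.1 hE.1).
- by move=> w'; apply: (klin_comp jEL_lin (mulr_linl _)).
- by move=> w; apply: (klin_comp jEL_lin (mulr_linr _)).
- by move=> w'; apply: (klin_comp (mulr_linl _) jEL_lin).
- by move=> w; apply: (klin_comp (mulr_linr _) jEL_lin).
- by move=> u v u' v'; rewrite hE.2.1 !jELE hL.2.1 Hi.1.2.1.
Qed.

Lemma jEL_1 : jEL 1 = 1.
Proof. by rewrite -hE.2.2 jELE Hi.1.2.2 hL.2.2. Qed.

Definition phi e := jEL (rho e).

Lemma phi_morph : kalg_morph phi.
Proof.
split; [|split].
- exact: (klin_comp jEL_lin hrho.1.1).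
- by move=> x y; rewrite /phi hrho.1.2.1 jEL_M.
- by rewrite /phi hrho.1.2.2 jEL_1.
Qed.

Definition cL := tlin tL (fun u v => eps v *: u).
Definition cE := tlin tE (fun u v => eps v *: u).

Lemma c_bil (U : lmodType k) : kbilinear (fun (u : U) (v : B) => eps v *: u).
Proof.
split => [v|u].
- exact: scale_linr.
- by move=> a x y; rewrite heps scalerDl scalerA.
Qed.

Lemma cLE u v : cL (tL u v) = eps v *: u.
Proof. by rewrite /cL (tlinE hL.1) //; apply: c_bil. Qed.

Lemma cEE u v : cE (tE u v) = eps v *: u.
Proof. by rewrite /cE (tlinE hE.1) //; apply: c_bil. Qed.

Lemma cL_lin : klinear cL.
Proof. by apply: (tlin_lin hL.1); apply: c_bil. Qed.

Lemma cE_lin : klinear cE.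
Proof. by apply: (tlin_lin hE.1); apply: c_bil. Qed.

Lemma cL_M X Y : cL (X * Y) = cL X * cL Y.
Proof.
apply: (text2 (F := fun X Y => cL (X * Y)) (G := fun X Y => cL X * cL Y) hL.1 hL.1).
- by move=> w'; apply: (klin_comp cL_lin (mulr_linl _)).
- by move=> w; apply: (klin_comp cL_lin (mulr_linr _)).
- by move=> w'; apply: (klin_comp (mulr_linl _) cL_lin).
- by move=> w; apply: (klin_comp (mulr_linr _) cL_lin).
- by move=> u v u' v'; rewrite hL.2.1 !cLE hepsM -scalerAl -scalerAr scalerA.
Qed.

Lemma cL_1 : cL 1 = 1.
Proof. by rewrite -hL.2.2 cLE heps1 scale1r. Qed.

Lemma cL_jEL X : cL (jEL X) = iT (cE X).
Proof.
apply: (text hE.1 (g := fun X => cL (jEL X)) (h := fun X => iT (cE X))).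
- exact: (klin_comp cL_lin jEL_lin).
- exact: (klin_comp iTlin cE_lin).
- by move=> u v; rewrite jELE cLE cEE (klinZ iTlin).
Qed.


Section Coassoc.
Variable rhoT : L -> LB.
Hypotheses (hR : kalg_morph rhoT) (hRi : forall e, rhoT (iT e) = phi e).

Let l31 v x : klinear (fun u => tL3 u v x) := hL3.1.1 v x.
Let l32 u x : klinear (fun v => tL3 u v x) := hL3.1.2.1 u x.
Let l33 u v : klinear (tL3 u v) := hL3.1.2.2 u v.
Let e31 v x : klinear (fun u => tE3 u v x) := hE3.1.1 v x.
Let e32 u x : klinear (fun v => tE3 u v x) := hE3.1.2.1 u x.
Let e33 u v : klinear (tE3 u v) := hE3.1.2.2 u v.

Definition chi v := tlin tL (fun u' v' => tL3 u' v' v).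
Definition kap u0 := tlin tBB (fun v1 v2 => tL3 u0 v1 v2).
Definition chiE v := tlin tE (fun u' v' => tE3 u' v' v).
Definition kapE u0 := tlin tBB (fun v1 v2 => tE3 u0 v1 v2).

Lemma chi_bil v : kbilinear (fun u' v' => tL3 u' v' v).
Proof. by split => [v'|u']; [apply: l31 | apply: l32]. Qed.
Lemma kap_bil u0 : kbilinear (fun v1 v2 => tL3 u0 v1 v2).
Proof. by split => [v'|u']; [apply: l32 | apply: l33]. Qed.
Lemma chiE_bil v : kbilinear (fun u' v' => tE3 u' v' v).
Proof. by split => [v'|u']; [apply: e31 | apply: e32]. Qed.
Lemma kapE_bil u0 : kbilinear (fun v1 v2 => tE3 u0 v1 v2).
Proof. by split => [v'|u']; [apply: e32 | apply: e33]. Qed.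

Lemma chiE_ u v w : chi w (tL u v) = tL3 u v w.
Proof. by rewrite /chi (tlinE hL.1) //; apply: chi_bil. Qed.
Lemma kapE_ u v w : kap u (tBB v w) = tL3 u v w.
Proof. by rewrite /kap (tlinE hBB.1) //; apply: kap_bil. Qed.
Lemma chiEE u v w : chiE w (tE u v) = tE3 u v w.
Proof. by rewrite /chiE (tlinE hE.1) //; apply: chiE_bil. Qed.
Lemma kapEE u v w : kapE u (tBB v w) = tE3 u v w.
Proof. by rewrite /kapE (tlinE hBB.1) //; apply: kapE_bil. Qed.

Lemma chi_lin v : klinear (chi v).
Proof. by apply: (tlin_lin hL.1); apply: chi_bil. Qed.
Lemma kap_lin u : klinear (kap u).
Proof. by apply: (tlin_lin hBB.1); apply: kap_bil. Qed.
Lemma chiE_lin v : klinear (chiE v).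
Proof. by apply: (tlin_lin hE.1); apply: chiE_bil. Qed.
Lemma kapE_lin u : klinear (kapE u).
Proof. by apply: (tlin_lin hBB.1); apply: kapE_bil. Qed.

Lemma chi_linv X : klinear (fun v => chi v X).
Proof.
apply: (tlin_param (f := fun v u' v' => tL3 u' v' v) hL.1).
- exact: chi_bil.
- by move=> u v; apply: l33.
Qed.
Lemma kap_linu P : klinear (fun u => kap u P).
Proof.
apply: (tlin_param (f := fun u v1 v2 => tL3 u v1 v2) hBB.1).
- exact: kap_bil.
- by move=> u v; apply: l31.
Qed.
Lemma chiE_linv X : klinear (fun v => chiE v X).
Proof.
apply: (tlin_param (f := fun v u' v' => tE3 u' v' v) hE.1).
- exact: chiE_bil.
- by move=> u v; apply: e33.
Qed.
Lemma kapE_linu P : klinear (fun u => kapE u P).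
Proof.
apply: (tlin_param (f := fun u v1 v2 => tE3 u v1 v2) hBB.1).
- exact: kapE_bil.
- by move=> u v; apply: e31.
Qed.

Definition psi := tlin tL (fun u0 v => chi v (rhoT u0)).
Definition del := tlin tL (fun u0 v => kap u0 (Delta v)).
Definition psiE := tlin tE (fun u0 v => chiE v (rho u0)).
Definition delE := tlin tE (fun u0 v => kapE u0 (Delta v)).

Lemma psi_bil : kbilinear (fun u0 v => chi v (rhoT u0)).
Proof. split => [v|u]; [exact: (klin_comp (chi_lin v) hR.1) | exact: chi_linv]. Qed.
Lemma del_bil : kbilinear (fun u0 v => kap u0 (Delta v)).
Proof. split => [v|u]; [exact: kap_linu | exact: (klin_comp (kap_lin u) hD.1)]. Qed.
Lemma psiE_bil : kbilinear (fun u0 v => chiE v (rho u0)).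
Proof. split => [v|u]; [exact: (klin_comp (chiE_lin v) hrho.1.1) | exact: chiE_linv]. Qed.
Lemma delE_bil : kbilinear (fun u0 v => kapE u0 (Delta v)).
Proof. split => [v|u]; [exact: kapE_linu | exact: (klin_comp (kapE_lin u) hD.1)]. Qed.

Lemma psiE_ u v : psi (tL u v) = chi v (rhoT u).
Proof. by rewrite /psi (tlinE hL.1) //; apply: psi_bil. Qed.
Lemma delE_ u v : del (tL u v) = kap u (Delta v).
Proof. by rewrite /del (tlinE hL.1) //; apply: del_bil. Qed.
Lemma psiEE u v : psiE (tE u v) = chiE v (rho u).
Proof. by rewrite /psiE (tlinE hE.1) //; apply: psiE_bil. Qed.
Lemma delEE u v : delE (tE u v) = kapE u (Delta v).
Proof. by rewrite /delE (tlinE hE.1) //; apply: delE_bil. Qed.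

Lemma psi_lin : klinear psi.
Proof. by apply: (tlin_lin hL.1); apply: psi_bil. Qed.
Lemma del_lin : klinear del.
Proof. by apply: (tlin_lin hL.1); apply: del_bil. Qed.
Lemma psiE_lin : klinear psiE.
Proof. by apply: (tlin_lin hE.1); apply: psiE_bil. Qed.
Lemma delE_lin : klinear delE.
Proof. by apply: (tlin_lin hE.1); apply: delE_bil. Qed.

Definition j3 := tlin3 tE3 (fun e b c => tL3 (iT e) b c).
Lemma j3_tri : ktrilinear (fun e b c => tL3 (iT e) b c).
Proof.
split; [|split] => [v x|u x|u v].
- exact: (klin_comp (l31 v x) iTlin).
- exact: l32.
- exact: l33.
Qed.
Lemma j3E e b c : j3 (tE3 e b c) = tL3 (iT e) b c.
Proof. by rewrite /j3 tlin3E //; apply: j3_tri. Qed.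
Lemma j3_lin : klinear j3.
Proof. by apply: tlin3_lin => //; apply: j3_tri. Qed.

Lemma L1 v X : chi v (jEL X) = j3 (chiE v X).
Proof.
apply: (text hE.1 (g := fun X => chi v (jEL X)) (h := fun X => j3 (chiE v X))).
- exact: (klin_comp (chi_lin v) jEL_lin).
- exact: (klin_comp j3_lin (chiE_lin v)).
- by move=> u w; rewrite jELE chiE_ chiEE j3E.
Qed.

Lemma L2 X : psi (jEL X) = j3 (psiE X).
Proof.
apply: (text hE.1 (g := fun X => psi (jEL X)) (h := fun X => j3 (psiE X))).
- exact: (klin_comp psi_lin jEL_lin).
- exact: (klin_comp j3_lin psiE_lin).
- by move=> u w; rewrite jELE psiE_ psiEE hRi L1.
Qed.

Lemma L3 u P : kap (iT u) P = j3 (kapE u P).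
Proof.
apply: (text hBB.1 (g := kap (iT u)) (h := fun P => j3 (kapE u P))).
- exact: kap_lin.
- exact: (klin_comp j3_lin (kapE_lin u)).
- by move=> v w; rewrite kapE_ kapEE j3E.
Qed.

Lemma L4 X : del (jEL X) = j3 (delE X).
Proof.
apply: (text hE.1 (g := fun X => del (jEL X)) (h := fun X => j3 (delE X))).
- exact: (klin_comp del_lin jEL_lin).
- exact: (klin_comp j3_lin delE_lin).
- by move=> u w; rewrite jELE delE_ delEE L3.
Qed.

Let mu3 := mu tL3.

Lemma M1 b b' X X' : chi (b * b') (X * X') = mu3 (chi b X) (chi b' X').
Proof.
apply: (text2 (F := fun X X' => chi (b * b') (X * X')) (G := fun X X' => mu3 (chi b X) (chi b' X')) hL.1 hL.1).
- by move=> w'; apply: (klin_comp (chi_lin _) (mulr_linl _)).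
- by move=> w; apply: (klin_comp (chi_lin _) (mulr_linr _)).
- by move=> w'; apply: (klin_comp (mu_linl hL3 _) (chi_lin _)).
- by move=> w; apply: (klin_comp (mu_linr hL3 _) (chi_lin _)).
- by move=> u v u' v'; rewrite hL.2.1 !chiE_ /mu3 muE.
Qed.

Lemma M2 X X' : psi (X * X') = mu3 (psi X) (psi X').
Proof.
apply: (text2 (F := fun X X' => psi (X * X')) (G := fun X X' => mu3 (psi X) (psi X')) hL.1 hL.1).
- by move=> w'; apply: (klin_comp psi_lin (mulr_linl _)).
- by move=> w; apply: (klin_comp psi_lin (mulr_linr _)).
- by move=> w'; apply: (klin_comp (mu_linl hL3 _) psi_lin).
- by move=> w; apply: (klin_comp (mu_linr hL3 _) psi_lin).
- by move=> u v u' v'; rewrite hL.2.1 !psiE_ hR.2.1 M1.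
Qed.

Lemma M3 a a' P P' : kap (a * a') (P * P') = mu3 (kap a P) (kap a' P').
Proof.
apply: (text2 (F := fun P P' => kap (a * a') (P * P')) (G := fun P P' => mu3 (kap a P) (kap a' P')) hBB.1 hBB.1).
- by move=> w'; apply: (klin_comp (kap_lin _) (mulr_linl _)).
- by move=> w; apply: (klin_comp (kap_lin _) (mulr_linr _)).
- by move=> w'; apply: (klin_comp (mu_linl hL3 _) (kap_lin _)).
- by move=> w; apply: (klin_comp (mu_linr hL3 _) (kap_lin _)).
- by move=> u v u' v'; rewrite hBB.2.1 !kapE_ /mu3 muE.
Qed.

Lemma M4 X X' : del (X * X') = mu3 (del X) (del X').
Proof.
apply: (text2 (F := fun X X' => del (X * X')) (G := fun X X' => mu3 (del X) (del X')) hL.1 hL.1).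
- by move=> w'; apply: (klin_comp del_lin (mulr_linl _)).
- by move=> w; apply: (klin_comp del_lin (mulr_linr _)).
- by move=> w'; apply: (klin_comp (mu_linl hL3 _) del_lin).
- by move=> w; apply: (klin_comp (mu_linr hL3 _) del_lin).
- by move=> u v u' v'; rewrite hL.2.1 !delE_ hD.2.1 M3.
Qed.

Lemma rhoT_coassoc : coassoc tL tBB tL3 rhoT Delta.
Proof.
move=> u.
change (psi (rhoT u) = del (rhoT u)); move: u.
apply: (@ext_unique _ _ _ _ _ Hi _ mu3 (tL3 1 1 1) (mu_assoc hL3) (mu1x hL3) (mux1 hL3)
   (fun x => psi (rhoT x)) (fun x => del (rhoT x))).
- by move=> a b; rewrite hR.2.1 M2.
- by move=> a b; rewrite hR.2.1 M4.
- by rewrite hR.2.2 -hL.2.2 psiE_ hR.2.2 -hL.2.2 chiE_.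
- by rewrite hR.2.2 -hL.2.2 delE_ hD.2.2 -hBB.2.2 kapE_.
- move=> r; rewrite hRi /phi L2 L4; congr j3; exact: hrho.2.1.
Qed.

Lemma rhoT_counit : rcounital tL rhoT eps.
Proof.
move=> u; change (cL (rhoT u) = u); move: u.
apply: (@ext_unique _ _ _ _ _ Hi _ *%R 1 (@mulrA _) (@mul1r _) (@mulr1 _)
   (fun x => cL (rhoT x)) (fun x => x)) => //.
- by move=> a b; rewrite hR.2.1 cL_M.
- by rewrite hR.2.2 cL_1.
- move=> r; rewrite hRi /phi cL_jEL; congr iT; exact: hrho.2.2.
Qed.

End Coassoc.

End Main.


Unset Implicit Arguments.

Theorem mainTheorem1 (k : fieldType)
  (B BB : algType k) (BBB : lmodType k)
  (tBB : B -> B -> BB) (tBBB : B -> B -> B -> BBB)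
  (Delta : B -> BB) (eps : B -> k)
  (E EB : algType k) (EBB : lmodType k)
  (tE : E -> B -> EB) (tE3 : E -> B -> B -> EBB) (rho : E -> EB)
  (T : pred E)
  (L LB : algType k) (LBB : lmodType k)
  (tL : L -> B -> LB) (tL3 : L -> B -> B -> LBB) (iT : E -> L) :
  is_algtensor tBB -> is_tensor3 tBBB -> is_bialgebra tBB tBBB Delta eps ->
  is_algtensor tE -> is_tensor3 tE3 ->
  is_comodule_algebra tE tE3 tBB Delta eps rho ->
  left_ore_set T -> is_left_fractions T iT ->
  is_algtensor tL -> is_tensor3 tL3 ->
  (rho_compatible iT tE tL tL3 tBB Delta eps rho <->
   forall t, T t -> invertible (tlin tE (fun e b => tL (iT e) b) (rho t))).
Proof.
move=> hBB hBBB hbi hE hE3 hrho HT Hi hL hL3.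
have [hD [heps [hepsM [heps1 _]]]] := hbi.
split.
- move=> [rT [[[hR _] hRi] _]] t Tt.
  have [y [ty yt]] := Hi.2.1 t Tt.
  by exists (rT y); rewrite -hRi -!hR.2.1 ty yt hR.2.2.
- move=> Hinv.
  have hph := phi_morph hE hrho Hi hL.
  have hR := oext_morph HT Hi hph Hinv.
  have hRi := oext_iT HT Hi hph Hinv.
  exists (oext T iT (phi tE rho tL iT)); split.
  + split; last exact: hRi.
    split; [exact: hR | split].
    * exact: (rhoT_coassoc hBB hD hE hE3 hrho Hi hL hL3 hR hRi).
    * exact: (rhoT_counit heps hepsM heps1 hE hrho Hi hL hR hRi).
  + move=> r' [[hR' _] hRi'].
    apply: functional_extensionality.
    apply: (@ext_unique _ _ _ _ _ Hi _ *%R 1 (@mulrA _) (@mul1r _) (@mulr1 _)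
      (oext T iT (phi tE rho tL iT)) r' hR.2.1 hR'.2.1 hR.2.2 hR'.2.2).
    by move=> r; rewrite hRi hRi'.
Qed.
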